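(* Let $n\ge1$ and let $\lambda_1,\dots,\lambda_n$ be distinct complex numbers with $\mathrm{Re}(\lambda_j)>-1/2$ for all $j$. Then for every Müntz polynomial $P(x)=\sum_{j=1}^na_jx^{\lambda_j}$ ($x\in(0,1]$) with $a_j\in\mathbb{C}$, $$\|xP'(x)\|_{L_2[0,1]} \le \left(\max_{1\le j\le n}|\lambda_j| + \left(\sum_{j=1}^n\left(1+2\mathrm{Re}(\lambda_j)\right)\sum_{k=j+1}^n\left(1+2\mathrm{Re}(\lambda_k)\right)\right)^{1/2}\right)\|P\|_{L_2[0,1]}.$$
   Context: $x^{\lambda}:=e^{\lambda\log x}$ for $x\in(0,1]$; $\|g\|_{L_2[0,1]}=(\int_0^1|g(x)|^2dx)^{1/2}$. *)

(* Defs.v *)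
From Stdlib Require Import Reals Lra.
Open Scope R_scope.

Definition Cx : Type := (R * R)%type.
Definition Re (z : Cx) : R := fst z.
Definition Im (z : Cx) : R := snd z.
Definition Cplus (z w : Cx) : Cx := (Re z + Re w, Im z + Im w).
Definition Cmult (z w : Cx) : Cx :=
  (Re z * Re w - Im z * Im w, Re z * Im w + Im z * Re w).
Definition Cexp (z : Cx) : Cx := (exp (Re z) * cos (Im z), exp (Re z) * sin (Im z)).
Definition Cnorm2 (z : Cx) : R := Re z ^ 2 + Im z ^ 2.
Definition Cmod (z : Cx) : R := sqrt (Cnorm2 z).

Definition cpow (x : R) (lam : Cx) : Cx := Cexp (Cmult lam (ln x, 0)).

Fixpoint Csum (n : nat) (f : nat -> Cx) : Cx :=
  match n with O => (0, 0) | S m => Cplus (Csum m f) (f m) end.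
Fixpoint Rsum (n : nat) (f : nat -> R) : R :=
  match n with O => 0 | S m => Rsum m f + f m end.

(* Muntz polynomial P(x) = sum_{j<n} a_j x^{lam_j} (indices shifted to 0..n-1) *)
Definition muntz (n : nat) (a lam : nat -> Cx) (x : R) : Cx :=
  Csum n (fun j => Cmult (a j) (cpow x (lam j))).

Fixpoint maxmod (n : nat) (lam : nat -> Cx) : R :=
  match n with O => 0 | S m => Rmax (maxmod m lam) (Cmod (lam m)) end.

(* sum_{j} (1 + 2 Re lam_j) sum_{k > j} (1 + 2 Re lam_k), indices 0..n-1 *)
Definition wt (lam : nat -> Cx) (j : nat) : R := 1 + 2 * Re (lam j).
Definition dsum (n : nat) (lam : nat -> Cx) : R :=
  Rsum n (fun j => wt lam j * Rsum (n - j - 1) (fun i => wt lam (j + 1 + i))).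

Definition improper_int01 (f : R -> R) (I : R) : Prop :=
  (forall e, 0 < e <= 1 -> inhabited (Riemann_integrable f e 1)) /\
  (forall eps, 0 < eps -> exists delta, 0 < delta /\
     forall e (pr : Riemann_integrable f e 1),
       0 < e -> e < delta -> e <= 1 -> Rabs (RiemannInt pr - I) < eps).

(* Main.v *)
From Stdlib Require Import Reals Lra Lia Psatz FunctionalExtensionality.
From Coquelicot Require Import Coquelicot.
Require Import Defs.
Open Scope R_scope.

Notation cplus := Coquelicot.Complex.Cplus.
Notation cmult := Coquelicot.Complex.Cmult.

Ltac cring := match goal with |- @eq _ ?a ?b => change (@eq C a b); ring end.

Lemma Cplus_eq : forall z w, Defs.Cplus z w = (z + w)%C.
Proof. reflexivity. Qed.
Lemma Cmult_eq : forall z w, Defs.Cmult z w = (z * w)%C.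
Proof. reflexivity. Qed.

Lemma Csum_S : forall m f, Csum (S m) f = (Csum m f + f m)%C.
Proof. reflexivity. Qed.

Lemma Csum_ext : forall m f g, (forall j, (j < m)%nat -> f j = g j) -> Csum m f = Csum m g.
Proof.
  induction m; intros f g H; simpl; auto.
  rewrite (IHm f g) by (intros; apply H; lia). rewrite (H m) by lia. reflexivity.
Qed.

Lemma Csum_plus : forall m f g, Csum m (fun j => f j + g j)%C = (Csum m f + Csum m g)%C.
Proof.
  induction m; intros; rewrite ?Csum_S.
  - simpl. apply injective_projections; simpl; lra.
  - rewrite IHm. cring.
Qed.

Lemma Csum_scal : forall m c f, Csum m (fun j => c * f j)%C = (c * Csum m f)%C.
Proof.
  induction m; intros; rewrite ?Csum_S.
  - apply injective_projections; simpl; lra.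
  - rewrite IHm. cring.
Qed.

Lemma Csum_scal_r : forall m c f, Csum m (fun j => f j * c)%C = (Csum m f * c)%C.
Proof.
  intros. rewrite (Csum_ext m _ (fun j => c * f j)%C) by (intros; cring).
  rewrite Csum_scal. cring.
Qed.

Lemma Csum_zero : forall m f, (forall j, (j < m)%nat -> f j = RtoC 0) -> Csum m f = RtoC 0.
Proof.
  induction m; intros f H. reflexivity.
  rewrite Csum_S, IHm. rewrite H by lia. cring. intros; apply H; lia.
Qed.

Lemma Csum_conj : forall m f, Cconj (Csum m f) = Csum m (fun j => Cconj (f j)).
Proof.
  induction m; intros. apply injective_projections; simpl; lra.
  rewrite !Csum_S, <- IHm. apply injective_projections; simpl; lra.
Qed.

Lemma Csum_mult : forall m f g,
  (Csum m f * Csum m g)%C = Csum m (fun j => Csum m (fun k => f j * g k))%C.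
Proof.
  intros. rewrite <- Csum_scal_r.
  apply Csum_ext; intros. rewrite <- Csum_scal. reflexivity.
Qed.

Lemma Csum_swap : forall m p (f : nat -> nat -> C),
  Csum m (fun j => Csum p (fun k => f j k)) = Csum p (fun k => Csum m (fun j => f j k)).
Proof.
  induction m; intros.
  - simpl. symmetry. apply Csum_zero. reflexivity.
  - rewrite Csum_S, IHm, <- Csum_plus. reflexivity.
Qed.

Lemma fst_Csum : forall m f, fst (Csum m f) = Rsum m (fun j => fst (f j)).
Proof. induction m; intros; simpl; auto. rewrite IHm; auto. Qed.
Lemma snd_Csum : forall m f, snd (Csum m f) = Rsum m (fun j => snd (f j)).
Proof. induction m; intros; simpl; auto. rewrite IHm; auto. Qed.

Lemma Rsum_ext : forall m f g, (forall j, (j < m)%nat -> f j = g j) -> Rsum m f = Rsum m g.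
Proof.
  induction m; intros f g H; simpl; auto.
  rewrite (IHm f g) by (intros; apply H; lia). rewrite (H m) by lia. reflexivity.
Qed.
Lemma Rsum_plus : forall m f g, Rsum m (fun j => f j + g j) = Rsum m f + Rsum m g.
Proof. induction m; intros; simpl. lra. rewrite IHm. lra. Qed.
Lemma Rsum_scal : forall m c f, Rsum m (fun j => f j * c) = Rsum m f * c.
Proof. induction m; intros; simpl. lra. rewrite IHm. lra. Qed.
Lemma Rsum_le : forall m f g, (forall j, (j < m)%nat -> f j <= g j) -> Rsum m f <= Rsum m g.
Proof.
  induction m; intros f g H; simpl. lra.
  assert (Rsum m f <= Rsum m g) by (apply IHm; intros; apply H; lia).
  specialize (H m ltac:(lia)). lra.
Qed.
Lemma Rsum_abs : forall m f, Rabs (Rsum m f) <= Rsum m (fun j => Rabs (f j)).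
Proof.
  induction m; intros; simpl. rewrite Rabs_R0; lra.
  eapply Rle_trans. apply Rabs_triang. specialize (IHm f). lra.
Qed.
Lemma Rsum_nonneg : forall m f, (forall j, (j < m)%nat -> 0 <= f j) -> 0 <= Rsum m f.
Proof.
  intros. replace 0 with (Rsum m (fun _ => 0)). apply Rsum_le; auto.
  clear. induction m; simpl; lra.
Qed.
Definition vadd (a b : nat -> C) : nat -> C := fun j => (a j + b j)%C.
Definition vscal (c : C) (a : nat -> C) : nat -> C := fun j => (c * a j)%C.
Definition Dv (lam a : nat -> C) : nat -> C := fun j => (lam j * a j)%C.

Lemma fst_le_sqrt : forall c : C, fst c <= sqrt (Cnorm2 c).
Proof.
  intros [c1 c2]. unfold Cnorm2, Re, Im; simpl.
  apply Rle_trans with (Rabs c1). apply Rle_abs.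
  rewrite <- sqrt_Rsqr_abs. apply sqrt_le_1_alt. unfold Rsqr. nra.
Qed.

Lemma quad_lemma : forall A X Y, (forall t, 0 <= A - 2*t*X + t^2*X*Y) -> 0 <= X -> 0 <= Y -> X <= A*Y.
Proof.
  intros A X Y H HX HY.
  destruct (Req_dec Y 0) as [->|HY0].
  - destruct (Req_dec X 0) as [->|HX0]. lra.
    specialize (H ((A+1)/(2*X))).
    replace (A - 2 * ((A + 1) / (2 * X)) * X + ((A + 1) / (2 * X)) ^ 2 * X * 0) with (-1) in H
      by (field; lra). lra.
  - specialize (H (1/Y)).
    replace (A - 2 * (1 / Y) * X + (1 / Y) ^ 2 * X * Y) with (A - X/Y) in H by (field; lra).
    assert (0 <= (A - X/Y) * Y) by (apply Rmult_le_pos; lra).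
    replace ((A - X/Y)*Y) with (A*Y - X) in H0 by (field; lra). lra.
Qed.

Lemma sqrt_le_prod : forall P a G, 0 <= a -> 0 <= G -> P <= a * G -> sqrt P <= sqrt a * sqrt G.
Proof. intros. rewrite <- sqrt_mult by auto. apply sqrt_le_1_alt; auto. Qed.

Lemma combine_lemma : forall X P Q al be G H,
  0 <= P -> 0 <= Q -> 0 <= al -> 0 <= be -> 0 <= G -> 0 <= H ->
  X <= (sqrt P + sqrt Q)^2 -> P <= al*G -> Q <= be*H -> X <= (al+be)*(G+H).
Proof.
  intros X P Q al be G H HP HQ Ha Hb HG HH HX H1 H2.
  pose proof (sqrt_le_prod P al G Ha HG H1) as S1.
  pose proof (sqrt_le_prod Q be H Hb HH H2) as S2.
  pose proof (sqrt_positivity P HP). pose proof (sqrt_positivity Q HQ).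
  pose proof (sqrt_positivity al Ha). pose proof (sqrt_positivity be Hb).
  pose proof (sqrt_positivity G HG). pose proof (sqrt_positivity H HH).
  pose proof (sqrt_sqrt al Ha) as Q1. pose proof (sqrt_sqrt be Hb) as Q2.
  pose proof (sqrt_sqrt G HG) as Q3. pose proof (sqrt_sqrt H HH) as Q4.
  set (ra := sqrt al) in *. set (rb := sqrt be) in *. set (rg := sqrt G) in *. set (rh := sqrt H) in *.
  assert (E1 : (sqrt P + sqrt Q)^2 <= (ra*rg + rb*rh)^2).
  { assert (0 <= sqrt P + sqrt Q) by lra. assert (sqrt P + sqrt Q <= ra*rg+rb*rh) by lra. nra. }
  assert (E2 : (ra*rg + rb*rh)^2 <= (ra*ra + rb*rb) * (rg*rg + rh*rh)).
  { assert (0 <= (ra*rh - rb*rg)^2) by apply pow2_ge_0.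
    assert ((ra*ra+rb*rb)*(rg*rg+rh*rh) - (ra*rg+rb*rh)^2 = (ra*rh - rb*rg)^2) by ring. lra. }
  rewrite <- Q1, <- Q2, <- Q3, <- Q4. lra.
Qed.

Lemma selfbound_lemma : forall X A B, 0 <= X -> 0 <= A -> 0 <= B -> X <= sqrt A * sqrt (B*X) -> X <= A*B.
Proof.
  intros X A B HX HA HB H.
  rewrite <- sqrt_mult in H by nra.
  assert (X*X <= A*(B*X)).
  { assert (0 <= A*(B*X)) by (apply Rmult_le_pos; nra).
    rewrite <- (sqrt_sqrt (A*(B*X))) by auto.
    pose proof (sqrt_positivity (A*(B*X)) H0). nra. }
  destruct (Req_dec X 0) as [->|HX0]. nra.
  assert (0 < X) by lra. nra.
Qed.

Lemma cmult_norm : forall z w : C, Cnorm2 (z * w)%C = Cnorm2 z * Cnorm2 w.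
Proof. intros [a b] [c d]. unfold Cnorm2, Re, Im; simpl. ring. Qed.

Lemma cnorm2_nonneg : forall z, 0 <= Cnorm2 z.
Proof. intros [a b]. unfold Cnorm2, Re, Im; simpl. nra. Qed.

Lemma fst_conj_le : forall z w : C, fst (z * Cconj w)%C <= sqrt (Cnorm2 z) * sqrt (Cnorm2 w).
Proof.
  intros. rewrite <- sqrt_mult by apply cnorm2_nonneg.
  eapply Rle_trans. apply fst_le_sqrt. apply sqrt_le_1_alt.
  rewrite cmult_norm. destruct w as [c d]. unfold Cnorm2, Re, Im; simpl. nra.
Qed.

Lemma cmink : forall z w : C, Cnorm2 (z + w)%C <= (sqrt (Cnorm2 z) + sqrt (Cnorm2 w))^2.
Proof.
  intros. pose proof (fst_conj_le z w).
  pose proof (sqrt_sqrt _ (cnorm2_nonneg z)). pose proof (sqrt_sqrt _ (cnorm2_nonneg w)).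
  replace (Cnorm2 (z+w)%C) with (Cnorm2 z + Cnorm2 w + 2 * fst (z * Cconj w)%C).
  nra. destruct z as [a b], w as [c d]. unfold Cnorm2, Re, Im; simpl. ring.
Qed.
Section Alg.
Variable n : nat.
Variable lam : nat -> C.
Hypothesis hre : forall j, (j < n)%nat -> -/2 < fst (lam j).

Definition den j k : C := (1 + lam j + Cconj (lam k))%C.
Lemma den_nz : forall j k, (j < n)%nat -> (k < n)%nat -> den j k <> 0%C.
Proof.
  intros j k Hj Hk H. apply (f_equal fst) in H. unfold den in H; simpl in H.
  pose proof (hre j Hj); pose proof (hre k Hk). lra.
Qed.
Definition gg j k : C := Cinv (den j k).
Lemma gg_mul : forall j k, (j < n)%nat -> (k < n)%nat -> (den j k * gg j k)%C = 1%C.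
Proof. intros. apply Cinv_r, den_nz; auto. Qed.
Lemma gg_conj : forall j k, (j < n)%nat -> (k < n)%nat -> Cconj (gg j k) = gg k j.
Proof.
  intros. unfold gg. rewrite Cinv_conj by (apply den_nz; auto). f_equal.
  unfold den. apply injective_projections; simpl; lra.
Qed.

Definition Bf (a b : nat -> C) : C :=
  Csum n (fun j => Csum n (fun k => a j * Cconj (b k) * gg j k))%C.
Definition nrm2 a := fst (Bf a a).

Lemma Bf_herm : forall a b, Bf b a = Cconj (Bf a b).
Proof.
  intros. unfold Bf. rewrite Csum_swap, Csum_conj. apply Csum_ext; intros k Hk.
  rewrite Csum_conj. apply Csum_ext; intros j Hj.
  rewrite !Cmult_conj, Cconj_conj, gg_conj by auto. cring.
Qed.

Lemma Bf_addl : forall a a' b, Bf (vadd a a') b = (Bf a b + Bf a' b)%C.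
Proof.
  intros. unfold Bf. rewrite <- Csum_plus. apply Csum_ext; intros.
  rewrite <- Csum_plus. apply Csum_ext; intros. unfold vadd. cring.
Qed.
Lemma Bf_scall : forall c a b, Bf (vscal c a) b = (c * Bf a b)%C.
Proof.
  intros. unfold Bf. rewrite <- Csum_scal. apply Csum_ext; intros.
  rewrite <- Csum_scal. apply Csum_ext; intros. unfold vscal. cring.
Qed.
Lemma Bf_addr : forall a b b', Bf a (vadd b b') = (Bf a b + Bf a b')%C.
Proof.
  intros. rewrite (Bf_herm (vadd b b') a), Bf_addl, Cplus_conj, <- !Bf_herm. reflexivity.
Qed.
Lemma Bf_scalr : forall c a b, Bf a (vscal c b) = (Cconj c * Bf a b)%C.
Proof.
  intros. rewrite (Bf_herm (vscal c b) a), Bf_scall, Cmult_conj, <- !Bf_herm. reflexivity.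
Qed.

Lemma Bf_ident : forall a b,
  (Bf (Dv lam a) b + Bf a (Dv lam b) + Bf a b)%C = (Csum n a * Cconj (Csum n b))%C.
Proof.
  intros. rewrite Csum_conj, Csum_mult. unfold Bf.
  rewrite <- !Csum_plus. apply Csum_ext; intros j Hj.
  rewrite <- !Csum_plus. apply Csum_ext; intros k Hk.
  unfold Dv. rewrite Cmult_conj.
  transitivity (a j * Cconj (b k) * (den j k * gg j k))%C.
  unfold den. cring. rewrite gg_mul by auto. cring.
Qed.

Lemma Bf_self : forall a, Bf a a = RtoC (nrm2 a).
Proof.
  intros. pose proof (Bf_herm a a) as H. unfold nrm2.
  destruct (Bf a a) as [x y]. apply (f_equal snd) in H. simpl in H.
  apply injective_projections; simpl; lra.
Qed.

Lemma Bf_expand : forall a b k,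
  Bf (vadd a (vscal k b)) (vadd a (vscal k b)) =
  (Bf a a + Cconj k * Bf a b + k * Bf b a + k * Cconj k * Bf b b)%C.
Proof.
  intros. rewrite Bf_addl, !Bf_addr, Bf_scall, !Bf_scalr, Bf_scall. cring.
Qed.

Lemma nrm2_expand : forall a b k,
  nrm2 (vadd a (vscal k b)) = nrm2 a + 2 * fst (Cconj k * Bf a b)%C + Cnorm2 k * nrm2 b.
Proof.
  intros. unfold nrm2 at 1. rewrite Bf_expand, (Bf_herm a b), (Bf_self a), (Bf_self b).
  destruct (Bf a b) as [c1 c2]. destruct k as [k1 k2].
  unfold Cnorm2, Re, Im. simpl. ring.
Qed.

Lemma nrm2_scal : forall c a, nrm2 (vscal c a) = Cnorm2 c * nrm2 a.
Proof.
  intros. unfold nrm2. rewrite Bf_scall, Bf_scalr, (Bf_self a).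
  destruct c as [c1 c2]. unfold Cnorm2, Re, Im. simpl. ring.
Qed.

Hypothesis psd : forall a, 0 <= nrm2 a.

Lemma CS : forall a b, Cnorm2 (Bf a b) <= nrm2 a * nrm2 b.
Proof.
  intros. apply quad_lemma; auto.
  - intros t. pose proof (psd (vadd a (vscal (RtoC (-t) * Bf a b)%C b))) as H.
    rewrite nrm2_expand in H. destruct (Bf a b) as [c1 c2].
    unfold Cnorm2, Re, Im in *; simpl in *. nra.
  - unfold Cnorm2. nra.
Qed.

Lemma Bf_null : forall a b, nrm2 b = 0 -> Bf a b = 0%C.
Proof.
  intros. pose proof (CS a b). rewrite H, Rmult_0_r in H0.
  destruct (Bf a b) as [c1 c2]. unfold Cnorm2, Re, Im in H0; simpl in H0.
  apply injective_projections; simpl; nra.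
Qed.

Lemma pythag : forall g u c, Bf g u = 0%C -> nrm2 (vadd g (vscal c u)) = nrm2 g + Cnorm2 c * nrm2 u.
Proof.
  intros. rewrite nrm2_expand, H. simpl. ring.
Qed.

Lemma mink : forall a b, nrm2 (vadd a b) <= (sqrt (nrm2 a) + sqrt (nrm2 b))^2.
Proof.
  intros.
  replace (vadd a b) with (vadd a (vscal 1%C b)).
  2:{ apply functional_extensionality; intros; unfold vadd, vscal. cring. }
  rewrite nrm2_expand.
  replace (Cconj 1 * Bf a b)%C with (Bf a b) by (apply injective_projections; simpl; ring).
  pose proof (fst_le_sqrt (Bf a b)). pose proof (CS a b).
  assert (sqrt (Cnorm2 (Bf a b)) <= sqrt (nrm2 a) * sqrt (nrm2 b)).
  { rewrite <- sqrt_mult by auto. apply sqrt_le_1_alt; auto. }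
  replace (Cnorm2 (RtoC 1)) with 1 by (unfold Cnorm2, Re, Im; simpl; ring).
  pose proof (sqrt_sqrt _ (psd a)). pose proof (sqrt_sqrt _ (psd b)). nra.
Qed.

Definition inV (m : nat) (a : nat -> C) := forall j, (m <= j)%nat -> (j < n)%nat -> a j = 0%C.
Definition ev (m : nat) : nat -> C := fun j => if Nat.eq_dec j m then 1%C else 0%C.
Definition vsub a b := vadd a (vscal (RtoC (-1)) b).

Lemma inV_add : forall m a b, inV m a -> inV m b -> inV m (vadd a b).
Proof. unfold inV, vadd; intros. rewrite H, H0 by auto. cring. Qed.
Lemma inV_scal : forall m c a, inV m a -> inV m (vscal c a).
Proof. unfold inV, vscal; intros. rewrite H by auto. cring. Qed.
Lemma inV_mono : forall m m' a, (m <= m')%nat -> inV m a -> inV m' a.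
Proof. unfold inV; intros. apply H0; lia. Qed.
Lemma inV_Dv : forall m a, inV m a -> inV m (Dv lam a).
Proof. unfold inV, Dv; intros. rewrite H by auto. cring. Qed.
Lemma inV_ev : forall m, inV (S m) (ev m).
Proof. unfold inV, ev; intros. destruct (Nat.eq_dec j m). lia. reflexivity. Qed.
Lemma inV_n : forall a, inV n a.
Proof. unfold inV; intros; lia. Qed.

Lemma inV0_Bf : forall a b, inV 0 a -> Bf a b = 0%C.
Proof.
  intros. unfold Bf. apply Csum_zero; intros. apply Csum_zero; intros.
  rewrite H by lia. cring.
Qed.
Lemma inV0_nrm : forall a, inV 0 a -> nrm2 a = 0.
Proof. intros. unfold nrm2. rewrite inV0_Bf; auto. Qed.
Lemma inV0_sum : forall a, inV 0 a -> Csum n a = RtoC 0.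
Proof. intros. apply Csum_zero; intros. apply H; lia. Qed.

Lemma Bf_lin4 : forall a k b c l d,
  Bf (vadd a (vscal k b)) (vadd c (vscal l d)) =
  (Bf a c + Cconj l * Bf a d + k * Bf b c + k * Cconj l * Bf b d)%C.
Proof. intros. rewrite Bf_addl, !Bf_addr, Bf_scall, !Bf_scalr, Bf_scall. cring. Qed.

Lemma decomp : forall m pm, inV m pm -> forall h, inV (S m) h ->
  exists h'', inV m h'' /\ h = vadd h'' (vscal (h m) (vsub (ev m) pm)).
Proof.
  intros m pm Hpm h Hh.
  exists (vadd (fun j => if Nat.eq_dec j m then 0%C else h j) (vscal (h m) pm)). split.
  - apply inV_add. intros j Hj Hjn. destruct (Nat.eq_dec j m). reflexivity. apply Hh; lia.
    apply inV_scal; auto.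
  - apply functional_extensionality; intros j. unfold vsub, vadd, vscal, ev.
    destruct (Nat.eq_dec j m) as [->|Hne]; cbv beta iota; cring.
Qed.

Lemma proj_exists : forall m, (m <= n)%nat -> forall x, exists p, inV m p /\
  forall h, inV m h -> Bf (vsub x p) h = 0%C.
Proof.
  induction m; intros Hm x.
  - exists (fun _ => 0%C). split. intros j _ _. reflexivity.
    intros. rewrite Bf_herm, inV0_Bf by auto. apply injective_projections; simpl; lra.
  - destruct (IHm ltac:(lia) (ev m)) as [pm [Hpm Opm]].
    set (u := vsub (ev m) pm).
    assert (Hu : forall h, inV m h -> Bf u h = 0%C) by (intros; apply Opm; auto).
    destruct (IHm ltac:(lia) x) as [p [Hp Op]].
    destruct (Req_dec (nrm2 u) 0) as [Hz|Hnz].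
    + exists p. split. apply inV_mono with m; auto.
      intros h Hh. destruct (decomp m pm Hpm h Hh) as [h'' [H1 ->]].
      rewrite Bf_addr, Bf_scalr, Op by auto. fold u. rewrite (Bf_null _ _ Hz).
      cring.
    + set (k := (Bf (vsub x p) u * Cinv (RtoC (nrm2 u)))%C).
      exists (vadd p (vscal k u)). split.
      * apply inV_add. apply inV_mono with m; auto. apply inV_scal.
        apply inV_add. apply inV_ev. apply inV_scal, inV_mono with m; auto.
      * intros h Hh. destruct (decomp m pm Hpm h Hh) as [h'' [H1 ->]]. fold u.
        replace (vsub x (vadd p (vscal k u))) with (vadd (vsub x p) (vscal (-k)%C u)).
        2:{ apply functional_extensionality; intros j. unfold vsub, vadd, vscal. cring. }
        rewrite Bf_lin4, Op, Hu by auto. rewrite Bf_self. unfold k.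
        assert (RtoC (nrm2 u) <> 0%C).
        { intro E. apply (f_equal fst) in E. simpl in E. lra. }
        field. auto.
Qed.

Lemma stepdata : forall m, (m < n)%nat -> exists u, inV (S m) u /\
  (forall h, inV m h -> Bf u h = 0%C) /\
  (forall f, inV (S m) f -> exists g, inV m g /\ f = vadd g (vscal (f m) u)).
Proof.
  intros m Hm. destruct (proj_exists m ltac:(lia) (ev m)) as [pm [Hpm Opm]].
  exists (vsub (ev m) pm). split; [|split].
  - apply inV_add. apply inV_ev. apply inV_scal, inV_mono with m; auto.
  - intros; apply Opm; auto.
  - intros f Hf. apply decomp; auto.
Qed.

Lemma Bf_orth_r : forall u h, Bf u h = 0%C -> Bf h u = 0%C.
Proof. intros. rewrite Bf_herm, H. apply injective_projections; simpl; lra. Qed.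

Definition beta_of m u := vadd (Dv lam u) (vscal (- lam m)%C u).

Lemma beta_inV : forall m u, inV (S m) u -> inV m (beta_of m u).
Proof.
  intros m u Hu j Hj Hjn. unfold beta_of, vadd, vscal, Dv.
  destruct (Nat.eq_dec j m) as [->|Hne]. cring.
  rewrite Hu by lia. cring.
Qed.

Lemma Dv_beta : forall m u, Dv lam u = vadd (vscal (lam m) u) (beta_of m u).
Proof.
  intros. apply functional_extensionality; intros j. unfold beta_of, vadd, vscal, Dv. cring.
Qed.

Lemma wt_pos : forall j, (j < n)%nat -> 0 < wt lam j.
Proof. intros. unfold wt, Re. pose proof (hre j H). lra. Qed.

Lemma K_nonneg : forall m, (m <= n)%nat -> 0 <= Rsum m (wt lam).
Proof. intros. apply Rsum_nonneg. intros. apply Rlt_le, wt_pos. lia. Qed.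

Lemma F1 : forall m u, (m < n)%nat -> inV (S m) u -> (forall h, inV m h -> Bf u h = 0%C) ->
  Cnorm2 (Csum n u) = wt lam m * nrm2 u.
Proof.
  intros m u Hm Hu Ou.
  pose proof (Bf_ident u u) as I.
  assert (E : Bf (Dv lam u) u = (lam m * RtoC (nrm2 u))%C).
  { rewrite (Dv_beta m u), Bf_addl, Bf_scall, Bf_self.
    rewrite (Bf_orth_r u (beta_of m u)) by (apply Ou, beta_inV; auto). cring. }
  rewrite (Bf_herm (Dv lam u) u), E, Bf_self in I.
  apply (f_equal fst) in I.
  unfold wt, Cnorm2, Re, Im. destruct (Csum n u) as [s1 s2]. destruct (lam m) as [l1 l2].
  simpl in *. nra.
Qed.

Lemma F2 : forall m u, (m < n)%nat -> inV (S m) u -> (forall h, inV m h -> Bf u h = 0%C) ->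
  (forall g, inV m g -> Cnorm2 (Csum n g) <= Rsum m (wt lam) * nrm2 g) ->
  nrm2 (beta_of m u) <= wt lam m * Rsum m (wt lam) * nrm2 u.
Proof.
  intros m u Hm Hu Ou C2.
  set (b := beta_of m u).
  assert (Hb : inV m b) by (apply beta_inV; auto).
  pose proof (Bf_ident u b) as I.
  rewrite (Ou (Dv lam b)) in I by (apply inV_Dv; auto).
  rewrite (Ou b) in I by auto.
  assert (E : Bf b b = Bf (Dv lam u) b).
  { unfold b at 1. unfold beta_of. rewrite Bf_addl, Bf_scall. fold b. rewrite (Ou b Hb). cring. }
  assert (E2 : nrm2 b = fst (Csum n u * Cconj (Csum n b))%C).
  { unfold nrm2. rewrite E, <- I. simpl. ring. }
  pose proof (fst_conj_le (Csum n u) (Csum n b)) as L.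
  rewrite <- E2 in L. rewrite (F1 m u) in L by auto.
  replace (wt lam m * Rsum m (wt lam) * nrm2 u) with ((wt lam m * nrm2 u) * Rsum m (wt lam)) by ring.
  apply selfbound_lemma. apply psd. apply Rmult_le_pos. apply Rlt_le, wt_pos; auto. apply psd.
  apply K_nonneg; lia.
  eapply Rle_trans. apply L. apply Rmult_le_compat_l. apply sqrt_positivity.
  apply Rmult_le_pos. apply Rlt_le, wt_pos; auto. apply psd.
  apply sqrt_le_1_alt. apply C2; auto.
Qed.

Lemma claim2 : forall m, (m <= n)%nat -> forall g, inV m g ->
  Cnorm2 (Csum n g) <= Rsum m (wt lam) * nrm2 g.
Proof.
  induction m; intros Hm g Hg.
  - rewrite inV0_sum, inV0_nrm by auto. unfold Cnorm2, Re, Im; simpl. lra.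
  - destruct (stepdata m ltac:(lia)) as [u [Hu [Ou Du]]].
    destruct (Du g Hg) as [g' [Hg' ->]].
    assert (IH := IHm ltac:(lia)).
    rewrite pythag by (apply Bf_orth_r, Ou; auto).
    unfold vadd, vscal. rewrite Csum_plus, Csum_scal. simpl Rsum.
    apply combine_lemma with (P := Cnorm2 (Csum n g')) (Q := Cnorm2 (g m * Csum n u)%C).
    apply cnorm2_nonneg. apply cnorm2_nonneg. apply K_nonneg; lia.
    apply Rlt_le, wt_pos; lia. apply psd.
    apply Rmult_le_pos. apply cnorm2_nonneg. apply psd.
    apply cmink. apply IH; auto.
    rewrite cmult_norm, (F1 m u) by (auto; lia). nra.
Qed.

Definition FF m := Rsum m (fun j => wt lam j * Rsum j (wt lam)).

Lemma FF_nonneg : forall m, (m <= n)%nat -> 0 <= FF m.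
Proof.
  intros. apply Rsum_nonneg. intros. apply Rmult_le_pos. apply Rlt_le, wt_pos; lia.
  apply K_nonneg; lia.
Qed.

Lemma maxmod_nonneg : forall m, 0 <= maxmod m lam.
Proof. induction m; simpl. lra. eapply Rle_trans. apply IHm. apply Rmax_l. Qed.

Lemma main_claim : forall m, (m <= n)%nat -> forall f, inV m f ->
  exists p q, inV m p /\ Dv lam f = vadd p q /\
    nrm2 p <= (maxmod m lam)^2 * nrm2 f /\ nrm2 q <= FF m * nrm2 f.
Proof.
  induction m; intros Hm f Hf.
  - exists (fun _ => 0%C), (Dv lam f). split; [|split; [|split]].
    + intros j _ _. reflexivity.
    + apply functional_extensionality; intros; unfold vadd. cring.
    + rewrite inV0_nrm. simpl. lra. intros j _ _. reflexivity.
    + rewrite inV0_nrm. unfold FF; simpl. lra. apply inV_Dv; auto.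
  - destruct (stepdata m ltac:(lia)) as [u [Hu [Ou Du]]].
    destruct (Du f Hf) as [g [Hg Ef]].
    destruct (IHm ltac:(lia) g Hg) as [p' [q' [Hp' [Eg [Np Nq]]]]].
    set (c := f m) in *.
    exists (vadd p' (vscal (c * lam m)%C u)), (vadd q' (vscal c (beta_of m u))).
    split; [|split; [|split]].
    + apply inV_add. apply inV_mono with m; auto. apply inV_scal; auto.
    + rewrite Ef. apply functional_extensionality; intros j.
      pose proof (equal_f Eg j) as Ej. unfold beta_of, Dv, vadd, vscal in *.
      transitivity (lam j * g j + c * (lam j * u j))%C. cring. rewrite Ej. cring.
    + rewrite Ef, !pythag by (apply Bf_orth_r, Ou; auto).
      rewrite cmult_norm.
      assert (M1 : maxmod m lam <= maxmod (S m) lam) by (simpl; apply Rmax_l).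
      assert (M2 : Cmod (lam m) <= maxmod (S m) lam) by (simpl; apply Rmax_r).
      assert (M3 : Cnorm2 (lam m) = Cmod (lam m) ^ 2).
      { unfold Cmod. rewrite pow2_sqrt. reflexivity. apply cnorm2_nonneg. }
      pose proof (maxmod_nonneg m). pose proof (sqrt_positivity (Cnorm2 (lam m)) (cnorm2_nonneg _)).
      fold (Cmod (lam m)) in H0.
      pose proof (psd g). pose proof (psd u). pose proof (cnorm2_nonneg c).
      assert (maxmod m lam ^2 <= maxmod (S m) lam ^2) by nra.
      assert (Cnorm2 (lam m) <= maxmod (S m) lam ^2) by nra.
      assert (Cnorm2 c * Cnorm2 (lam m) * nrm2 u <= maxmod (S m) lam ^2 * (Cnorm2 c * nrm2 u)).
      { replace (Cnorm2 c * Cnorm2 (lam m) * nrm2 u) with (Cnorm2 (lam m) * (Cnorm2 c * nrm2 u)) by ring.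
        apply Rmult_le_compat_r. nra. auto. }
      assert (maxmod m lam ^ 2 * nrm2 g <= maxmod (S m) lam ^ 2 * nrm2 g) by nra.
      nra.
    + rewrite Ef, (pythag g u c) by (apply Bf_orth_r, Ou; auto).
      unfold FF. simpl Rsum. fold (FF m).
      apply combine_lemma with (P := nrm2 q') (Q := nrm2 (vscal c (beta_of m u))).
      apply psd. apply psd. apply FF_nonneg; lia.
      apply Rmult_le_pos. apply Rlt_le, wt_pos; lia. apply K_nonneg; lia. apply psd.
      apply Rmult_le_pos. apply cnorm2_nonneg. apply psd.
      apply mink. auto.
      rewrite nrm2_scal. pose proof (F2 m u ltac:(lia) Hu Ou (claim2 m ltac:(lia))).
      pose proof (cnorm2_nonneg c). nra.
Qed.

Lemma alg_final : forall a, nrm2 (Dv lam a) <= ((maxmod n lam + sqrt (FF n))^2) * nrm2 a.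
Proof.
  intros a. destruct (main_claim n (le_n n) a (inV_n a)) as [p [q [_ [E [Np Nq]]]]].
  rewrite E. eapply Rle_trans. apply mink.
  pose proof (maxmod_nonneg n) as HM. pose proof (psd a) as Ha.
  assert (S1 : sqrt (nrm2 p) <= maxmod n lam * sqrt (nrm2 a)).
  { rewrite <- (sqrt_pow2 (maxmod n lam)) at 1 by auto. rewrite <- sqrt_mult by nra.
    apply sqrt_le_1_alt; auto. }
  assert (S2 : sqrt (nrm2 q) <= sqrt (FF n) * sqrt (nrm2 a)).
  { rewrite <- sqrt_mult by (auto; apply FF_nonneg; lia). apply sqrt_le_1_alt; auto. }
  pose proof (sqrt_positivity _ (psd p)). pose proof (sqrt_positivity _ (psd q)).
  pose proof (sqrt_positivity _ (FF_nonneg n (le_n n))).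
  pose proof (sqrt_positivity _ Ha). pose proof (sqrt_sqrt _ Ha).
  replace ((maxmod n lam + sqrt (FF n)) ^ 2 * nrm2 a) with
     ((maxmod n lam * sqrt (nrm2 a) + sqrt (FF n) * sqrt (nrm2 a))^2).
  2:{ rewrite <- H3 at 3. ring. }
  assert (0 <= sqrt (nrm2 p) + sqrt (nrm2 q)) by lra.
  assert (sqrt (nrm2 p) + sqrt (nrm2 q) <= maxmod n lam * sqrt (nrm2 a) + sqrt (FF n) * sqrt (nrm2 a)) by lra.
  nra.
Qed.
End Alg.

Lemma Rsum_S : forall m f, Rsum (S m) f = Rsum m f + f m.
Proof. reflexivity. Qed.

Lemma dsum_FF : forall n lam, dsum n lam = FF lam n.
Proof.
  intros n lam. unfold dsum, FF. induction n.
  - reflexivity.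
  - rewrite !Rsum_S. replace (S n - n - 1)%nat with 0%nat by lia.
    rewrite (Rsum_ext n _ (fun j => wt lam j * Rsum (n - j - 1) (fun i => wt lam (j + 1 + i)) + wt lam j * wt lam n)).
    2:{ intros j Hj. replace (S n - j - 1)%nat with (S (n - j - 1)) by lia. rewrite Rsum_S.
        replace (j + 1 + (n - j - 1))%nat with n by lia. ring. }
    rewrite Rsum_plus, IHn, Rsum_scal. simpl Rsum. ring.
Qed.

Lemma cpow_fst : forall x l, fst (cpow x l) = exp (fst l * ln x) * cos (snd l * ln x).
Proof. intros. unfold cpow, Cexp, Defs.Cmult, Re, Im; simpl.
  replace (fst l * ln x - snd l * 0) with (fst l * ln x) by ring;
  replace (fst l * 0 + snd l * ln x) with (snd l * ln x) by ring; reflexivity. Qed.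
Lemma cpow_snd : forall x l, snd (cpow x l) = exp (fst l * ln x) * sin (snd l * ln x).
Proof. intros. unfold cpow, Cexp, Defs.Cmult, Re, Im; simpl.
  replace (fst l * ln x - snd l * 0) with (fst l * ln x) by ring;
  replace (fst l * 0 + snd l * ln x) with (snd l * ln x) by ring; reflexivity. Qed.

Lemma cpow_add : forall x l l', cpow x (l + l')%C = (cpow x l * cpow x l')%C.
Proof.
  intros. apply injective_projections.
  - rewrite cpow_fst. change (fst (l + l')%C) with (fst l + fst l').
    change (snd (l+l')%C) with (snd l + snd l').
    change (fst (cpow x l * cpow x l')%C) with (fst (cpow x l) * fst (cpow x l') - snd (cpow x l) * snd (cpow x l')).
    rewrite !cpow_fst, !cpow_snd, !Rmult_plus_distr_r, exp_plus, cos_plus. ring.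
  - rewrite cpow_snd. change (fst (l + l')%C) with (fst l + fst l').
    change (snd (l+l')%C) with (snd l + snd l').
    change (snd (cpow x l * cpow x l')%C) with (fst (cpow x l) * snd (cpow x l') + snd (cpow x l) * fst (cpow x l')).
    rewrite !cpow_fst, !cpow_snd, !Rmult_plus_distr_r, exp_plus, sin_plus. ring.
Qed.

Lemma cpow_conj : forall x l, Cconj (cpow x l) = cpow x (Cconj l).
Proof.
  intros. apply injective_projections.
  - change (fst (Cconj (cpow x l))) with (fst (cpow x l)). rewrite !cpow_fst.
    change (snd (Cconj l)) with (- snd l). change (fst (Cconj l)) with (fst l).
    replace (- snd l * ln x) with (- (snd l * ln x)) by ring. rewrite cos_neg. ring.
  - change (snd (Cconj (cpow x l))) with (- snd (cpow x l)). rewrite !cpow_snd.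
    change (snd (Cconj l)) with (- snd l). change (fst (Cconj l)) with (fst l).
    replace (- snd l * ln x) with (- (snd l * ln x)) by ring. rewrite sin_neg. ring.
Qed.

Lemma cpow_one : forall l, cpow 1 l = RtoC 1.
Proof.
  intros. apply injective_projections; [rewrite cpow_fst|rewrite cpow_snd]; rewrite ln_1, !Rmult_0_r,
  exp_0, ?cos_0, ?sin_0; simpl; ring.
Qed.

Lemma cpow_x1 : forall x, 0 < x -> cpow x (RtoC 1) = RtoC x.
Proof.
  intros. apply injective_projections; [rewrite cpow_fst|rewrite cpow_snd]; simpl;
  rewrite Rmult_0_l, ?cos_0, ?sin_0, Rmult_1_l, exp_ln; auto; ring.
Qed.

Lemma deriv_fst : forall c l x, 0 < x ->
  is_derive (fun t => fst (c * cpow t l)%C) x (fst (c * l * cpow x l)%C / x).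
Proof.
  intros [c1 c2] [l1 l2] x Hx.
  apply is_derive_ext with (fun t => c1 * (exp (l1 * ln t) * cos (l2 * ln t)) - c2 * (exp (l1 * ln t) * sin (l2 * ln t))).
  { intros t. unfold Coquelicot.Complex.Cmult. cbn [fst snd]. rewrite cpow_fst, cpow_snd. cbn [fst snd]. reflexivity. }
  auto_derive. auto. unfold Coquelicot.Complex.Cmult. cbn [fst snd]. rewrite cpow_fst, cpow_snd. cbn [fst snd]. match goal with |- @eq _ ?a ?b => change (@eq R a b) end. field. lra.
Qed.

Lemma deriv_snd : forall c l x, 0 < x ->
  is_derive (fun t => snd (c * cpow t l)%C) x (snd (c * l * cpow x l)%C / x).
Proof.
  intros [c1 c2] [l1 l2] x Hx.
  apply is_derive_ext with (fun t => c1 * (exp (l1 * ln t) * sin (l2 * ln t)) + c2 * (exp (l1 * ln t) * cos (l2 * ln t))).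
  { intros t. unfold Coquelicot.Complex.Cmult. cbn [fst snd]. rewrite cpow_fst, cpow_snd. cbn [fst snd]. reflexivity. }
  auto_derive. auto. unfold Coquelicot.Complex.Cmult. cbn [fst snd]. rewrite cpow_fst, cpow_snd. cbn [fst snd]. match goal with |- @eq _ ?a ?b => change (@eq R a b) end. field. lra.
Qed.

Lemma Cnorm2_alt : forall z : C, Cnorm2 z = fst (z * Cconj z)%C.
Proof. intros [a b]. unfold Cnorm2, Re, Im; simpl. ring. Qed.

Definition term (lam b : nat -> C) j k x : R :=
  fst (b j * Cconj (b k) * cpow x (lam j + Cconj (lam k)))%C.

Lemma integrand_id : forall n lam b x,
  Cnorm2 (muntz n b lam x) = Rsum n (fun j => Rsum n (fun k => term lam b j k x)).
Proof.
  intros. rewrite Cnorm2_alt.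
  change (muntz n b lam x) with (Csum n (fun j => b j * cpow x (lam j))%C).
  rewrite Csum_conj, Csum_mult, fst_Csum. apply Rsum_ext; intros j Hj.
  rewrite fst_Csum. apply Rsum_ext; intros k Hk. unfold term. f_equal.
  rewrite Cmult_conj, cpow_conj, cpow_add. cring.
Qed.

Lemma is_derive_Rsum : forall m (F : nat -> R -> R) (F' : nat -> R) x,
  (forall j, (j < m)%nat -> is_derive (F j) x (F' j)) ->
  is_derive (fun t => Rsum m (fun j => F j t)) x (Rsum m F').
Proof.
  induction m; intros F F' x H.
  - simpl. apply is_derive_Reals, derivable_pt_lim_const.
  - simpl. apply (is_derive_plus (fun t => Rsum m (fun j => F j t)) (F m)).
    apply IHm. intros; apply H; lia. apply H; lia.
Qed.

Definition Fa n lam (b : nat -> C) x : R :=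
  Rsum n (fun j => Rsum n (fun k =>
    fst (b j * Cconj (b k) * gg lam j k * cpow x (lam j + Cconj (lam k) + 1))%C)).

Lemma Fa_deriv : forall n lam b x, (forall j, (j < n)%nat -> -/2 < fst (lam j)) -> 0 < x ->
  is_derive (Fa n lam b) x (Rsum n (fun j => Rsum n (fun k => term lam b j k x))).
Proof.
  intros n lam b x hre Hx. unfold Fa.
  apply (is_derive_Rsum n (fun j t => Rsum n (fun k =>
    fst (b j * Cconj (b k) * gg lam j k * cpow t (lam j + Cconj (lam k) + 1))%C))).
  intros j Hj.
  apply (is_derive_Rsum n (fun k t =>
    fst (b j * Cconj (b k) * gg lam j k * cpow t (lam j + Cconj (lam k) + 1))%C)).
  intros k Hk.
  replace (term lam b j k x) with (fst (b j * Cconj (b k) * gg lam j k * (lam j + Cconj (lam k) + 1) * cpow x (lam j + Cconj (lam k) + 1))%C / x).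
  apply deriv_fst; auto.
  rewrite cpow_add, cpow_x1 by auto.
  pose proof (gg_mul n lam hre j k Hj Hk) as G. unfold den in G.
  unfold term.
  replace (b j * Cconj (b k) * gg lam j k * (lam j + Cconj (lam k) + 1) *
     (cpow x (lam j + Cconj (lam k)) * RtoC x))%C
   with (b j * Cconj (b k) * cpow x (lam j + Cconj (lam k)) * RtoC x * ((1 + lam j + Cconj (lam k)) * gg lam j k))%C
   by cring.
  rewrite G. destruct (b j * Cconj (b k) * cpow x (lam j + Cconj (lam k)))%C as [p q].
  simpl. field. lra.
Qed.

Lemma term_deriv : forall lam b j k x, 0 < x -> ex_derive (fun t => term lam b j k t) x.
Proof.
  intros. eexists. unfold term. apply deriv_fst; auto.
Qed.

Lemma g_cont : forall n lam b x, 0 < x ->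
  continuous (fun t => Rsum n (fun j => Rsum n (fun k => term lam b j k t))) x.
Proof.
  intros. apply (@ex_derive_continuous R_AbsRing R_NormedModule).
  eexists. apply (is_derive_Rsum n (fun j t => Rsum n (fun k => term lam b j k t))).
  intros j Hj. apply (is_derive_Rsum n (fun k t => term lam b j k t)).
  intros k Hk. unfold term. apply deriv_fst; auto.

Qed.

Lemma exp_le_mono : forall x y, x <= y -> exp x <= exp y.
Proof.
  intros x y H. destruct (Rle_lt_or_eq_dec _ _ H). left; apply exp_increasing; auto. subst; lra.
Qed.

Lemma ln_le0 : forall e, 0 < e -> e <= 1 -> ln e <= 0.
Proof.
  intros e H1 H2. destruct (Rle_lt_or_eq_dec _ _ H2).
  rewrite <- ln_1. left. apply ln_increasing; auto. subst. rewrite ln_1. lra.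
Qed.

Lemma term_bound : forall c l e, 0 < e ->
  Rabs (fst (c * cpow e l)%C) <= (Rabs (fst c) + Rabs (snd c)) * exp (fst l * ln e).
Proof.
  intros [c1 c2] l e He.
  change (fst ((c1, c2) * cpow e l)%C) with (c1 * fst (cpow e l) - c2 * snd (cpow e l)).
  rewrite cpow_fst, cpow_snd. cbn [fst snd].
  pose proof (exp_pos (fst l * ln e)). pose proof (COS_bound (snd l * ln e)). pose proof (SIN_bound (snd l * ln e)).
  set (E := exp (fst l * ln e)) in *. set (co := cos (snd l * ln e)) in *. set (si := sin (snd l * ln e)) in *.
  unfold Rminus. eapply Rle_trans. apply Rabs_triang. rewrite Rabs_Ropp, !Rabs_mult.
  rewrite (Rabs_pos_eq E) by lra.
  assert (Rabs co <= 1) by (apply Rabs_le; lra). assert (Rabs si <= 1) by (apply Rabs_le; lra).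
  pose proof (Rabs_pos c1). pose proof (Rabs_pos c2). pose proof (Rabs_pos co). pose proof (Rabs_pos si).
  assert (E * Rabs co <= E) by (rewrite <- (Rmult_1_r E) at 2; apply Rmult_le_compat_l; lra).
  assert (E * Rabs si <= E) by (rewrite <- (Rmult_1_r E) at 2; apply Rmult_le_compat_l; lra).
  assert (Rabs c1 * (E * Rabs co) <= Rabs c1 * E) by (apply Rmult_le_compat_l; lra).
  assert (Rabs c2 * (E * Rabs si) <= Rabs c2 * E) by (apply Rmult_le_compat_l; lra).
  lra.
Qed.

Fixpoint rmin (lam : nat -> C) (m : nat) : R :=
  match m with O => 1 | S m' => Rmin (rmin lam m') (fst (lam m') + /2) end.

Lemma rmin_pos : forall lam m, (forall j, (j < m)%nat -> -/2 < fst (lam j)) -> 0 < rmin lam m.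
Proof.
  induction m; intros H; simpl. lra. apply Rmin_glb_lt. apply IHm; intros; apply H; lia.
  specialize (H m ltac:(lia)). lra.
Qed.

Lemma rmin_le : forall lam m j, (j < m)%nat -> rmin lam m <= fst (lam j) + /2.
Proof.
  induction m; intros j Hj. lia. simpl.
  destruct (Nat.eq_dec j m). subst. apply Rmin_r.
  eapply Rle_trans. apply Rmin_l. apply IHm. lia.
Qed.

Lemma improper_muntz : forall n lam b f,
  (forall j, (j < n)%nat -> -/2 < fst (lam j)) ->
  (forall x, 0 < x <= 1 -> f x = Cnorm2 (muntz n b lam x)) ->
  improper_int01 f (fst (Bf n lam b b)).
Proof.
  intros n lam b f hre Hf.
  set (gfun := fun t => Rsum n (fun j => Rsum n (fun k => term lam b j k t))).
  assert (FTC : forall e, 0 < e <= 1 -> is_RInt f e 1 (Fa n lam b 1 - Fa n lam b e)).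
  { intros e He. apply is_RInt_ext with gfun.
    { intros x Hx. rewrite Rmin_left, Rmax_right in Hx by lra. rewrite Hf by lra.
      rewrite integrand_id. reflexivity. }
    apply (is_RInt_derive (Fa n lam b) gfun e 1).
    - intros x Hx. rewrite Rmin_left, Rmax_right in Hx by lra. apply Fa_deriv; auto; lra.
    - intros x Hx. rewrite Rmin_left, Rmax_right in Hx by lra. apply g_cont; lra. }
  assert (F1 : Fa n lam b 1 = fst (Bf n lam b b)).
  { unfold Fa, Bf. rewrite fst_Csum. apply Rsum_ext; intros j Hj.
    rewrite fst_Csum. apply Rsum_ext; intros k Hk. rewrite cpow_one. f_equal. cring. }
  set (rho := rmin lam n).
  assert (Hrho : 0 < rho) by (apply rmin_pos; auto).
  set (A := fun j k => Rabs (fst (b j * Cconj (b k) * gg lam j k)%C) + Rabs (snd (b j * Cconj (b k) * gg lam j k)%C)).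
  set (Cst := Rsum n (fun j => Rsum n (fun k => A j k))).
  assert (HCst : 0 <= Cst).
  { apply Rsum_nonneg; intros; apply Rsum_nonneg; intros. unfold A.
    pose proof (Rabs_pos (fst (b j * Cconj (b j0) * gg lam j j0)%C)).
    pose proof (Rabs_pos (snd (b j * Cconj (b j0) * gg lam j j0)%C)). lra. }
  assert (BND : forall e, 0 < e <= 1 -> Rabs (Fa n lam b e) <= Cst * exp (2 * rho * ln e)).
  { intros e He. unfold Fa. eapply Rle_trans. apply Rsum_abs.
    unfold Cst. rewrite <- Rsum_scal. apply Rsum_le; intros j Hj.
    eapply Rle_trans. apply Rsum_abs. rewrite <- Rsum_scal. apply Rsum_le; intros k Hk.
    eapply Rle_trans. apply term_bound. lra. unfold A.
    apply Rmult_le_compat_l.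
    pose proof (Rabs_pos (fst (b j * Cconj (b k) * gg lam j k)%C)).
    pose proof (Rabs_pos (snd (b j * Cconj (b k) * gg lam j k)%C)). lra.
    apply exp_le_mono.
    pose proof (rmin_le lam n j Hj). pose proof (rmin_le lam n k Hk). fold rho in H, H0.
    pose proof (ln_le0 e ltac:(lra) ltac:(lra)).
    change (fst (lam j + Cconj (lam k) + 1)%C) with (fst (lam j) + fst (lam k) + 1).
    nra. }
  split.
  - intros e He. constructor. apply ex_RInt_Reals_0. eexists. apply FTC. auto.
  - intros eps Heps.
    set (q := eps / (Cst + 1)).
    assert (Hq : 0 < q) by (unfold q; apply Rdiv_lt_0_compat; lra).
    exists (exp (ln q / (2 * rho))). split. apply exp_pos.
    intros e pr He1 He2 He3.
    rewrite <- RInt_Reals, (is_RInt_unique f e 1 _ (FTC e ltac:(lra))), F1.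
    replace (fst (Bf n lam b b) - Fa n lam b e - fst (Bf n lam b b)) with (- Fa n lam b e) by ring.
    rewrite Rabs_Ropp. eapply Rle_lt_trans. apply BND. lra.
    assert (L1 : ln e < ln q / (2 * rho)).
    { rewrite <- (ln_exp (ln q / (2 * rho))). apply ln_increasing; auto. }
    assert (L2 : 2 * rho * ln e < ln q).
    { apply Rmult_lt_compat_l with (r := 2 * rho) in L1. 2: lra.
      replace (2 * rho * (ln q / (2 * rho))) with (ln q) in L1 by (field; lra). lra. }
    assert (L3 : exp (2 * rho * ln e) < q).
    { rewrite <- (exp_ln q) by auto. apply exp_increasing. auto. }
    pose proof (exp_pos (2 * rho * ln e)).
    assert (q * (Cst + 1) = eps) by (unfold q; field; lra).
    nra.
Qed.

Lemma improper_nonneg : forall f I, improper_int01 f I -> (forall x, 0 < x <= 1 -> 0 <= f x) -> 0 <= I.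
Proof.
  intros f I [H1 H2] Hf. destruct (Rle_or_lt 0 I) as [|HI]; auto.
  destruct (H2 (- I) ltac:(lra)) as [d [Hd Hdd]].
  set (e := Rmin (d/2) 1).
  assert (He : 0 < e) by (unfold e; apply Rmin_glb_lt; lra).
  assert (He1 : e <= 1) by apply Rmin_r.
  assert (He2 : e < d) by (unfold e; eapply Rle_lt_trans; [apply Rmin_l|lra]).
  destruct (H1 e (conj He He1)) as [pr].
  specialize (Hdd e pr He He2 He1).
  assert (0 <= RiemannInt pr).
  { rewrite <- RInt_Reals. apply RInt_ge_0. auto. apply ex_RInt_Reals_1. exact pr.
    intros; apply Hf; lra. }
  apply Rabs_def2 in Hdd. lra.
Qed.

Lemma Re_deriv : forall n (lam a : nat -> C) x, 0 < x ->
  derivable_pt_lim (fun t => Re (muntz n a lam t)) x (fst (muntz n (Dv lam a) lam x) / x).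
Proof.
  intros. apply is_derive_Reals.
  apply is_derive_ext with (fun t => Rsum n (fun j => fst (a j * cpow t (lam j))%C)).
  { intros t. unfold Re, muntz. rewrite fst_Csum. reflexivity. }
  replace (fst (muntz n (Dv lam a) lam x) / x) with (Rsum n (fun j => fst (a j * lam j * cpow x (lam j))%C / x)).
  apply (is_derive_Rsum n (fun j t => fst (a j * cpow t (lam j))%C)). intros; apply deriv_fst; auto.
  unfold muntz. rewrite fst_Csum. unfold Rdiv. rewrite <- Rsum_scal. apply Rsum_ext; intros.
  unfold Dv. match goal with |- context [Defs.Cmult ?u ?v] => change (Defs.Cmult u v) with (u * v)%C end. f_equal. f_equal. cring.
Qed.

Lemma Im_deriv : forall n (lam a : nat -> C) x, 0 < x ->
  derivable_pt_lim (fun t => Im (muntz n a lam t)) x (snd (muntz n (Dv lam a) lam x) / x).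
Proof.
  intros. apply is_derive_Reals.
  apply is_derive_ext with (fun t => Rsum n (fun j => snd (a j * cpow t (lam j))%C)).
  { intros t. unfold Im, muntz. rewrite snd_Csum. reflexivity. }
  replace (snd (muntz n (Dv lam a) lam x) / x) with (Rsum n (fun j => snd (a j * lam j * cpow x (lam j))%C / x)).
  apply (is_derive_Rsum n (fun j t => snd (a j * cpow t (lam j))%C)). intros; apply deriv_snd; auto.
  unfold muntz. rewrite snd_Csum. unfold Rdiv. rewrite <- Rsum_scal. apply Rsum_ext; intros.
  unfold Dv. match goal with |- context [Defs.Cmult ?u ?v] => change (Defs.Cmult u v) with (u * v)%C end. f_equal. f_equal. cring.
Qed.

Theorem lemma12p12 (n : nat) (lam a : nat -> Cx) (Pd : R -> Cx) :
  (1 <= n)%nat ->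
  (forall i j, (i < n)%nat -> (j < n)%nat -> i <> j -> lam i <> lam j) ->
  (forall j, (j < n)%nat -> Re (lam j) > - / 2) ->
  (* Pd is the derivative P' of P = muntz n a lam on (0, +oo) *)
  (forall x, 0 < x ->
     derivable_pt_lim (fun t => Re (muntz n a lam t)) x (Re (Pd x)) /\
     derivable_pt_lim (fun t => Im (muntz n a lam t)) x (Im (Pd x))) ->
  exists I1 I2,
    improper_int01 (fun x => Cnorm2 (Cmult (x, 0) (Pd x))) I1 /\
    improper_int01 (fun x => Cnorm2 (muntz n a lam x)) I2 /\
    sqrt I1 <= (maxmod n lam + sqrt (dsum n lam)) * sqrt I2.
Proof.
  intros Hn Hdist Hre HPd.
  assert (hre : forall j, (j < n)%nat -> -/2 < fst (lam j)) by (intros; apply Hre; auto).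
  assert (psd : forall v, 0 <= nrm2 n lam v).
  { intros v. apply (improper_nonneg (fun x => Cnorm2 (muntz n v lam x))).
    apply improper_muntz; auto. intros; apply cnorm2_nonneg. }
  assert (HP : forall x, 0 < x -> Cmult (x, 0) (Pd x) = muntz n (Dv lam a) lam x).
  { intros x Hx. destruct (HPd x Hx) as [D1 D2].
    pose proof (uniqueness_limite _ _ _ _ D1 (Re_deriv n lam a x Hx)) as E1.
    pose proof (uniqueness_limite _ _ _ _ D2 (Im_deriv n lam a x Hx)) as E2.
    unfold Re, Im in E1, E2. unfold Defs.Cmult, Re, Im. simpl.
    rewrite E1, E2. apply injective_projections; simpl; field; lra. }
  exists (fst (Bf n lam (Dv lam a) (Dv lam a))), (fst (Bf n lam a a)).
  split; [|split].
  - apply improper_muntz; auto. intros x Hx. rewrite HP by lra. reflexivity.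
  - apply improper_muntz; auto.
  - pose proof (alg_final n lam hre psd a) as AF. unfold nrm2 in AF.
    rewrite dsum_FF.
    pose proof (maxmod_nonneg lam n). pose proof (sqrt_positivity (FF lam n) (FF_nonneg n lam hre n (le_n n))).
    rewrite <- (sqrt_pow2 (maxmod n lam + sqrt (FF lam n))) by lra.
    rewrite <- sqrt_mult. apply sqrt_le_1_alt. exact AF.
    apply pow2_ge_0. apply psd.
Qed.
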